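(* Let $K$ be the set of nonempty open connected intervals of $S^1$ whose closure is different from $S^1$, with symmetry group the Möbius group. There exists $f\in\mathrm C^1(K,\mathcal D)^{\text{Möb}}$ such that $f_b$ is nonzero and non-negative for every non-degenerate 1-simplex $b$.
   Context: $K$ is ordered by inclusion; the Möbius group acts on $S^1$ by diffeomorphisms and on $K$ by $o\mapsto s(o)$. A 1-simplex is $b=(|b|;\partial_0b,\partial_1b)$ with $|b|,\partial_0b,\partial_1b\in K$ and $\partial_0b,\partial_1b\subseteq|b|$; it is degenerate if $|b|=\partial_0b=\partial_1b$. $s$ acts by $s(b)=(s(|b|);s(\partial_0b),s(\partial_1b))$. $\mathcal D_a$: real smooth functions on $S^1$ vanishing outside the closure of $a$. $\mathrm C^1(K,\mathcal D)$: maps $b\mapsto f_b\in\mathcal D_{|b|}$ on 1-simplices, with action $(sf)_b=f_{s(b)}\circ s$; $\mathrm C^1(K,\mathcal D)^{\text{Möb}}$ denotes the fixed points. *)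

(* Defs.v *)
From Stdlib Require Import Reals.
From Coquelicot Require Import Coquelicot.
Open Scope R_scope.

Definition circ (z : C) : Prop := Cmod z = 1.

Definition eang (t : R) : C := (cos t, sin t).

Definition cset := C -> Prop.

(** Elements of K: open arcs {e^{it} | a < t < a + l} with 0 < l < 2 pi,
    i.e. nonempty open connected intervals of S^1 whose closure is not S^1. *)
Definition inK (I : cset) : Prop :=
  exists a l : R, 0 < l /\ l < 2 * PI /\
    forall z, I z <-> exists t, a < t /\ t < a + l /\ z = eang t.

(** Topological closure (in C; for subsets of S^1 it agrees with the closure in S^1). *)
Definition closure (I : cset) : cset :=
  fun z => forall eps : R, 0 < eps -> exists w, I w /\ Cmod (Cminus z w) < eps.

(** Smooth real functions on S^1: the angle lift t |-> F(e^{it}) is C^infinity. *)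
Definition smooth_S1 (F : C -> R) : Prop :=
  forall (n : nat) (t : R), ex_derive_n (fun s => F (eang s)) n t.

Definition inD (I : cset) (F : C -> R) : Prop :=
  smooth_S1 F /\ forall z, circ z -> ~ closure I z -> F z = 0.

(** The Moebius group PSU(1,1) ~ PSL(2,R) acting on S^1:
    z |-> (alpha z + beta) / (conj beta z + conj alpha), |alpha|^2 - |beta|^2 = 1. *)
Definition is_mob (al be : C) : Prop := Cmod al ^ 2 - Cmod be ^ 2 = 1.

Definition mob (al be : C) (z : C) : C :=
  Cdiv (Cplus (Cmult al z) be) (Cplus (Cmult (Cconj be) z) (Cconj al)).

Definition img (s : C -> C) (I : cset) : cset := fun z => exists w, I w /\ z = s w.

Definition same_set (A B : cset) : Prop := forall z, A z <-> B z.
Definition subset (A B : cset) : Prop := forall z, A z -> B z.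

Record simplex1 := Simplex1 { supp : cset; bd0 : cset; bd1 : cset }.

Definition is_simplex1 (b : simplex1) : Prop :=
  inK (supp b) /\ inK (bd0 b) /\ inK (bd1 b) /\
  subset (bd0 b) (supp b) /\ subset (bd1 b) (supp b).

Definition degenerate (b : simplex1) : Prop :=
  same_set (supp b) (bd0 b) /\ same_set (bd0 b) (bd1 b).

Definition act_simplex (s : C -> C) (b : simplex1) : simplex1 :=
  Simplex1 (img s (supp b)) (img s (bd0 b)) (img s (bd1 b)).

Definition cochain1 (f : simplex1 -> C -> R) : Prop :=
  forall b, is_simplex1 b -> inD (supp b) (f b).

Definition mob_invariant (f : simplex1 -> C -> R) : Prop :=
  forall al be : C, is_mob al be ->
  forall b, is_simplex1 b ->
  forall z, circ z -> f (act_simplex (mob al be) b) (mob al be z) = f b z.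

(* Main.v *)
Require Import Defs.
From Stdlib Require Import Reals Lra Psatz Classical ZArith Lia.
From Stdlib Require Import ClassicalEpsilon FunctionalExtensionality PropExtensionality.
From Coquelicot Require Import Coquelicot.
Open Scope R_scope.

Lemma circ_conj (z : C) : circ z -> (z * Cconj z)%C = 1%C.
Proof. intro H. rewrite <- Cmod2_conj. unfold circ in H. rewrite H. simpl. f_equal; ring. Qed.

Lemma mob_conj (al be : C) : is_mob al be -> (al * Cconj al - be * Cconj be)%C = 1%C.
Proof. intro H. rewrite <- !Cmod2_conj. unfold is_mob in H. rewrite <- RtoC_minus, H. reflexivity. Qed.

Definition Dn (al be z : C) : C := (Cconj be * z + Cconj al)%C.

Lemma Dn_nz al be z : is_mob al be -> circ z -> Dn al be z <> 0%C.
Proof.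
  intros Hm Hz E. unfold Dn in E.
  assert (E' : (Cconj be * z)%C = (- Cconj al)%C).
  { replace (Cconj be * z)%C with ((Cconj be * z + Cconj al) - Cconj al)%C by ring. rewrite E. ring. }
  apply (f_equal Cmod) in E'. rewrite Cmod_mult, Cmod_opp, !Cmod_conj in E'.
  unfold circ in Hz. rewrite Hz, Rmult_1_r in E'. unfold is_mob in Hm. rewrite E' in Hm. lra.
Qed.

Lemma num_eq al be z : circ z -> (al * z + be)%C = (z * Cconj (Dn al be z))%C.
Proof.
  intro Hz. unfold Dn. rewrite Cplus_conj, Cmult_conj, !Cconj_conj.
  pose proof (circ_conj z Hz) as H.
  transitivity (al * z + be * 1)%C. ring. rewrite <- H. ring.
Qed.

Lemma mob_circ al be z : is_mob al be -> circ z -> circ (mob al be z).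
Proof.
  intros Hm Hz. unfold circ, mob. fold (Dn al be z).
  rewrite Cmod_div by (apply Dn_nz; auto).
  rewrite num_eq by auto. rewrite Cmod_mult, Cmod_conj. unfold circ in Hz. rewrite Hz.
  field. apply Rgt_not_eq. apply Cmod_gt_0. apply Dn_nz; auto.
Qed.

Lemma is_mob_inv al be : is_mob al be -> is_mob (Cconj al) (- be)%C.
Proof. unfold is_mob. rewrite Cmod_conj, Cmod_opp. auto. Qed.

Lemma mob_diff al be z p : is_mob al be -> circ z -> circ p ->
  (mob al be z - mob al be p)%C = ((z - p) / (Dn al be z * Dn al be p))%C.
Proof.
  intros Hm Hz Hp. pose proof (Dn_nz _ _ _ Hm Hz). pose proof (Dn_nz _ _ _ Hm Hp).
  unfold mob. fold (Dn al be z). fold (Dn al be p).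
  pose proof (mob_conj _ _ Hm) as M.
  unfold Dn in *.
  transitivity ((z - p) * (al * Cconj al - be * Cconj be) / ((Cconj be * z + Cconj al) * (Cconj be * p + Cconj al)))%C.
  field; auto. rewrite M. field; auto.
Qed.

Lemma circ_nz z : circ z -> z <> 0%C.
Proof. intros H E. unfold circ in H. rewrite E, Cmod_0 in H. lra. Qed.

Lemma conj_unit z : circ z -> Cconj z = (/ z)%C.
Proof.
  intro H. pose proof (circ_conj z H). pose proof (circ_nz z H).
  transitivity (/z * (z * Cconj z))%C. field; auto. rewrite H0. field; auto.
Qed.

Lemma mob_al_nz al be : is_mob al be -> al <> 0%C.
Proof.
  intros H E. unfold is_mob in H. rewrite E, Cmod_0 in H.
  pose proof (pow2_ge_0 (Cmod be)). simpl in H. lra.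
Qed.

Lemma mob_acj al be : is_mob al be -> Cconj al = ((1 + be * Cconj be) / al)%C.
Proof.
  intro H. pose proof (mob_conj _ _ H). pose proof (mob_al_nz _ _ H).
  rewrite <- H0. field; auto.
Qed.

Definition Delta (p z q : C) : R := Im (Cconj (z - p) * (q - p))%C.

Lemma Delta_unit p z q : circ p -> circ z -> circ q ->
  Delta p z q = Im ((p - z) * (q - p) / (z * p))%C.
Proof.
  intros Hp Hz Hq. unfold Delta. rewrite Cminus_conj, (conj_unit z), (conj_unit p) by auto.
  f_equal. pose proof (circ_nz _ Hp). pose proof (circ_nz _ Hz). field; auto.
Qed.

Lemma im_conj_sum c : Im (c + Cconj c)%C = 0.
Proof. destruct c; simpl. ring. Qed.

Lemma Dn_conj al be z : circ z -> Cconj (Dn al be z) = (be / z + al)%C.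
Proof.
  intro H. unfold Dn. rewrite Cplus_conj, Cmult_conj, !Cconj_conj, conj_unit by auto.
  unfold Cdiv. ring.
Qed.

Lemma Delta_mob al be p z q : is_mob al be -> circ p -> circ z -> circ q ->
  Delta (mob al be p) (mob al be z) (mob al be q) *
   (Cmod (Dn al be z) ^ 2 * Cmod (Dn al be p) ^ 2 * Cmod (Dn al be q) ^ 2)
  = Delta p z q.
Proof.
  intros Hm Hp Hz Hq.
  pose proof (Dn_nz _ _ _ Hm Hp) as Np. pose proof (Dn_nz _ _ _ Hm Hz) as Nz.
  pose proof (Dn_nz _ _ _ Hm Hq) as Nq.
  pose proof (mob_circ _ _ _ Hm Hp) as Tp. pose proof (mob_circ _ _ _ Hm Hz) as Tz.
  pose proof (mob_circ _ _ _ Hm Hq) as Tq.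
  rewrite (Delta_unit _ _ _ Tp Tz Tq), (Delta_unit _ _ _ Hp Hz Hq).
  rewrite <- im_scal_r. rewrite !RtoC_mult, !Cmod2_conj.
  pose proof (Dn_conj al be z Hz) as Cz. pose proof (Dn_conj al be p Hp) as Cp.
  pose proof (Dn_conj al be q Hq) as Cq.
  assert (Cz' : Cconj (Dn al be z) <> 0%C) by (intro E; apply Nz; rewrite <- (Cconj_conj (Dn al be z)), E; apply injective_projections; simpl; ring).
  assert (Cp' : Cconj (Dn al be p) <> 0%C) by (intro E; apply Np; rewrite <- (Cconj_conj (Dn al be p)), E; apply injective_projections; simpl; ring).
  assert (Cq' : Cconj (Dn al be q) <> 0%C) by (intro E; apply Nq; rewrite <- (Cconj_conj (Dn al be q)), E; apply injective_projections; simpl; ring).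
  rewrite Cz, Cp, Cq. rewrite Cz in Cz'. rewrite Cp in Cp'. rewrite Cq in Cq'.
  pose proof (circ_nz _ Hp). pose proof (circ_nz _ Hz). pose proof (circ_nz _ Hq).
  pose proof (circ_nz _ Tp). pose proof (circ_nz _ Tz).
  pose proof (mob_al_nz _ _ Hm) as Na.
  unfold mob in *. fold (Dn al be p) (Dn al be z) (Dn al be q) in *.
  set (X := ((p - z) * (q - p) / (z * p))%C).
  set (W := (X * Dn al be z * (be / q + al))%C).
  transitivity (Im W).
  { f_equal. unfold W, X.
    assert (Az : (al * z + be)%C <> 0%C) by (intro E; apply H3; rewrite E; unfold Cdiv; ring).
    assert (Ap : (al * p + be)%C <> 0%C) by (intro E; apply H2; rewrite E; unfold Cdiv; ring).
    clear Tp Tz Tq H2 H3.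
    unfold Dn in *. rewrite (mob_acj al be Hm) in *.
    field. repeat split; auto.
    - intro E; apply Np; replace (Cconj be * p + (1 + be * Cconj be) / al)%C with ((Cconj be * p * al + (1 + be * Cconj be)) / al)%C by (field; auto); rewrite E; unfold Cdiv; ring.
    - intro E; apply Nz; replace (Cconj be * z + (1 + be * Cconj be) / al)%C with ((Cconj be * z * al + (1 + be * Cconj be)) / al)%C by (field; auto); rewrite E; unfold Cdiv; ring.
    - intro E; apply Nq; replace (Cconj be * q + (1 + be * Cconj be) / al)%C with ((Cconj be * q * al + (1 + be * Cconj be)) / al)%C by (field; auto); rewrite E; unfold Cdiv; ring. }
  set (bb := (be * Cconj be)%C).
  set (c := (Cconj al * be * X * Cconj q)%C).
  assert (EW : W = (X + bb * (X + Cconj X) + (c + Cconj c))%C).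
  { unfold W, c, bb, X, Dn.
    rewrite !Cmult_conj, Cdiv_conj, !Cmult_conj, !Cminus_conj, !Cconj_conj by (apply Cmult_neq_0; auto).
    rewrite !(conj_unit z), !(conj_unit p), !(conj_unit q) by auto.
    rewrite (mob_acj al be Hm).
    field. repeat split; auto. }
  rewrite EW. unfold bb. rewrite <- Cmod2_conj.
  replace (Im (X + (Cmod be ^ 2)%R * (X + Cconj X) + (c + Cconj c))%C)
    with (Im X + Cmod be ^ 2 * Im (X + Cconj X) + Im (c + Cconj c)).
  rewrite !im_conj_sum. ring.
  destruct X, c; simpl; ring.
Qed.

Lemma is_mob_of_conj al be : (al * Cconj al - be * Cconj be)%C = 1%C -> is_mob al be.
Proof.
  intro H. unfold is_mob. rewrite <- !Cmod2_conj in H. rewrite <- RtoC_minus in H.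
  apply (f_equal fst) in H. simpl in H. exact H.
Qed.

Lemma mob_inv_l al be z : is_mob al be -> circ z ->
  mob (Cconj al) (- be)%C (mob al be z) = z.
Proof.
  intros Hm Hz. pose proof (Dn_nz _ _ _ Hm Hz) as Nz. pose proof (mob_conj _ _ Hm) as M.
  unfold mob. fold (Dn al be z). rewrite Copp_conj, Cconj_conj.
  unfold Dn in *.
  transitivity ((z * (al * Cconj al - be * Cconj be)) / (al * Cconj al - be * Cconj be))%C.
  2: { rewrite M. field. }
  field. rewrite M. split; auto. apply C1_nz.
Qed.

Lemma mob_inv_r al be z : is_mob al be -> circ z ->
  mob al be (mob (Cconj al) (- be)%C z) = z.
Proof.
  intros Hm Hz. pose proof (mob_inv_l (Cconj al) (- be)%C z (is_mob_inv _ _ Hm) Hz) as H.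
  rewrite Cconj_conj in H. replace (- - be)%C with be in H by ring. exact H.
Qed.

Definition comp_al (al be ga de : C) : C := (al * ga + be * Cconj de)%C.
Definition comp_be (al be ga de : C) : C := (al * de + be * Cconj ga)%C.

Lemma is_mob_comp al be ga de : is_mob al be -> is_mob ga de ->
  is_mob (comp_al al be ga de) (comp_be al be ga de).
Proof.
  intros H1 H2. apply is_mob_of_conj. pose proof (mob_conj _ _ H1) as M1.
  pose proof (mob_conj _ _ H2) as M2. unfold comp_al, comp_be.
  rewrite !Cplus_conj, !Cmult_conj, !Cconj_conj.
  transitivity ((al * Cconj al - be * Cconj be) * (ga * Cconj ga - de * Cconj de))%C.
  ring. rewrite M1, M2. ring.
Qed.

Lemma mob_comp al be ga de z : is_mob al be -> is_mob ga de -> circ z ->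
  mob al be (mob ga de z) = mob (comp_al al be ga de) (comp_be al be ga de) z.
Proof.
  intros H1 H2 Hz.
  pose proof (Dn_nz _ _ _ H2 Hz) as N1.
  pose proof (Dn_nz _ _ _ (is_mob_comp _ _ _ _ H1 H2) Hz) as N2.
  unfold mob. fold (Dn ga de z). fold (Dn (comp_al al be ga de) (comp_be al be ga de) z).
  unfold Dn in *. unfold comp_al, comp_be in *.
  rewrite !Cplus_conj, !Cmult_conj, !Cconj_conj in *.
  field. split; auto.
Qed.

Lemma mob_id z : mob 1%C 0%C z = z.
Proof.
  unfold mob. destruct z as [x y]. unfold Cconj, Cdiv, Cmult, Cplus, Cinv. simpl.
  apply injective_projections; simpl; field.
Qed.

Lemma is_mob_id : is_mob 1%C 0%C.
Proof. unfold is_mob. rewrite Cmod_1, Cmod_0. ring. Qed.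

Lemma Cmult_integral (a b : C) : (a * b = 0)%C -> a = 0%C \/ b = 0%C.
Proof.
  intro H. destruct (classic (a = 0%C)) as [Ha|Ha]; auto.
  destruct (classic (b = 0%C)) as [Hb|Hb]; auto.
  exfalso. exact (Cmult_neq_0 a b Ha Hb H).
Qed.

Lemma quad3 (A B C0 z1 z2 z3 : C) : z1 <> z2 -> z1 <> z3 -> z2 <> z3 ->
  (A * z1 * z1 + B * z1 + C0 = 0)%C -> (A * z2 * z2 + B * z2 + C0 = 0)%C ->
  (A * z3 * z3 + B * z3 + C0 = 0)%C -> A = 0%C /\ B = 0%C /\ C0 = 0%C.
Proof.
  intros d12 d13 d23 E1 E2 E3.
  assert (F12 : (A * (z1 + z2) + B = 0)%C).
  { assert (G : ((z1 - z2) * (A * (z1 + z2) + B) = 0)%C).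
    { transitivity ((A * z1 * z1 + B * z1 + C0) - (A * z2 * z2 + B * z2 + C0))%C. ring.
      rewrite E1, E2. ring. }
    apply Cmult_integral in G. destruct G as [G|G]; auto.
    exfalso; apply d12. transitivity ((z1 - z2) + z2)%C. ring. rewrite G. ring. }
  assert (F13 : (A * (z1 + z3) + B = 0)%C).
  { assert (G : ((z1 - z3) * (A * (z1 + z3) + B) = 0)%C).
    { transitivity ((A * z1 * z1 + B * z1 + C0) - (A * z3 * z3 + B * z3 + C0))%C. ring.
      rewrite E1, E3. ring. }
    apply Cmult_integral in G. destruct G as [G|G]; auto.
    exfalso; apply d13. transitivity ((z1 - z3) + z3)%C. ring. rewrite G. ring. }
  assert (HA : A = 0%C).
  { assert (G : (A * (z2 - z3) = 0)%C).
    { transitivity ((A * (z1 + z2) + B) - (A * (z1 + z3) + B))%C. ring. rewrite F12, F13. ring. }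
    apply Cmult_integral in G. destruct G as [G|G]; auto.
    exfalso; apply d23. transitivity ((z2 - z3) + z3)%C. ring. rewrite G. ring. }
  subst A.
  assert (HB : B = 0%C) by (rewrite <- F12; ring). subst B.
  split; auto. split; auto. rewrite <- E1. ring.
Qed.

Lemma mob_agree3 al be ga de z1 z2 z3 : is_mob al be -> is_mob ga de ->
  circ z1 -> circ z2 -> circ z3 -> z1 <> z2 -> z1 <> z3 -> z2 <> z3 ->
  mob al be z1 = mob ga de z1 -> mob al be z2 = mob ga de z2 -> mob al be z3 = mob ga de z3 ->
  forall z, circ z -> mob al be z = mob ga de z.
Proof.
  intros H1 H2 C1 C2 C3 d12 d13 d23 E1 E2 E3.
  set (A := (al * Cconj de - ga * Cconj be)%C).
  set (B := (al * Cconj ga + be * Cconj de - ga * Cconj al - de * Cconj be)%C).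
  set (C0 := (be * Cconj ga - de * Cconj al)%C).
  assert (key : forall w, circ w -> mob al be w = mob ga de w -> (A * w * w + B * w + C0 = 0)%C).
  { intros w Hw E. pose proof (Dn_nz _ _ _ H1 Hw) as N1. pose proof (Dn_nz _ _ _ H2 Hw) as N2.
    unfold mob in E. fold (Dn al be w) (Dn ga de w) in E.
    transitivity ((al * w + be) * Dn ga de w - (ga * w + de) * Dn al be w)%C.
    unfold A, B, C0, Dn. ring.
    replace ((al * w + be) * Dn ga de w)%C with ((al * w + be) / Dn al be w * Dn al be w * Dn ga de w)%C by (field; auto).
    rewrite E. field; auto. }
  destruct (quad3 A B C0 z1 z2 z3 d12 d13 d23 (key _ C1 E1) (key _ C2 E2) (key _ C3 E3)) as [HA [HB HC]].
  intros z Hz. pose proof (Dn_nz _ _ _ H1 Hz) as N1. pose proof (Dn_nz _ _ _ H2 Hz) as N2.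
  unfold mob. fold (Dn al be z) (Dn ga de z).
  assert (G : ((al * z + be) * Dn ga de z - (ga * z + de) * Dn al be z = 0)%C).
  { transitivity (A * z * z + B * z + C0)%C. unfold A, B, C0, Dn. ring. rewrite HA, HB, HC. ring. }
  transitivity ((al * z + be) * Dn ga de z / (Dn al be z * Dn ga de z))%C. field; auto.
  transitivity ((ga * z + de) * Dn al be z / (Dn al be z * Dn ga de z))%C.
  2: field; auto.
  f_equal. transitivity (((al * z + be) * Dn ga de z - (ga * z + de) * Dn al be z) + (ga * z + de) * Dn al be z)%C. ring.
  rewrite G. ring.
Qed.

Lemma Delta_coord p z q : Delta p z q =
  (fst z - fst p) * (snd q - snd p) - (snd z - snd p) * (fst q - fst p).
Proof. destruct p, z, q. unfold Delta. simpl. ring. Qed.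

Lemma Delta_eang0 a t b : Delta (eang a) (eang t) (eang b) =
  sin (b - t) + sin (t - a) + sin (a - b).
Proof. rewrite Delta_coord. unfold eang; simpl. rewrite !sin_minus. ring. Qed.

Lemma sin3 u v : sin (2 * v) + sin (2 * u) + sin (- (2 * u + 2 * v)) =
  4 * sin u * sin v * sin (u + v).
Proof.
  rewrite sin_neg, sin_plus, !sin_2a, !cos_2a, sin_plus.
  pose proof (sin2_cos2 u) as Hu. pose proof (sin2_cos2 v) as Hv. unfold Rsqr in *.
  transitivity (4 * sin u * sin v * (sin u * cos v + cos u * sin v) + 2 * sin v * cos v * (1 - (sin u * sin u + cos u * cos u))
     + 2 * sin u * cos u * (1 - (sin v * sin v + cos v * cos v))).
  ring. rewrite Hu, Hv. ring.
Qed.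

Lemma Delta_eang a t b : Delta (eang a) (eang t) (eang b) =
  4 * sin ((t - a) / 2) * sin ((b - t) / 2) * sin ((b - a) / 2).
Proof.
  rewrite Delta_eang0.
  replace ((b - a) / 2) with ((t - a) / 2 + (b - t) / 2) by field. rewrite <- sin3.
  replace (2 * ((b - t) / 2)) with (b - t) by field.
  replace (2 * ((t - a) / 2)) with (t - a) by field.
  replace (- ((t - a) + (b - t))) with (a - b) by field. reflexivity.
Qed.

Lemma circ_eang t : circ (eang t).
Proof.
  unfold circ, eang, Cmod.
  assert (E : fst (cos t, sin t) ^ 2 + snd (cos t, sin t) ^ 2 = 1).
  { simpl. pose proof (sin2_cos2 t). unfold Rsqr in *. nra. }
  rewrite E. apply sqrt_1.
Qed.

Lemma cos_periodZ x (m : Z) : cos (x + 2 * IZR m * PI) = cos x.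
Proof.
  destruct (Z_le_gt_dec 0%Z m) as [H|H].
  - rewrite <- (Z2Nat.id m H). rewrite <- INR_IZR_INZ. apply cos_period.
  - assert (E : m = (- Z.of_nat (Z.to_nat (- m)))%Z) by lia.
    rewrite E, opp_IZR, <- INR_IZR_INZ.
    rewrite <- (cos_period (x + 2 * - INR (Z.to_nat (- m)) * PI) (Z.to_nat (- m))).
    f_equal. ring.
Qed.

Lemma sin_periodZ x (m : Z) : sin (x + 2 * IZR m * PI) = sin x.
Proof.
  destruct (Z_le_gt_dec 0%Z m) as [H|H].
  - rewrite <- (Z2Nat.id m H). rewrite <- INR_IZR_INZ. apply sin_period.
  - assert (E : m = (- Z.of_nat (Z.to_nat (- m)))%Z) by lia.
    rewrite E, opp_IZR, <- INR_IZR_INZ.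
    rewrite <- (sin_period (x + 2 * - INR (Z.to_nat (- m)) * PI) (Z.to_nat (- m))).
    f_equal. ring.
Qed.

Lemma polar0 z : circ z -> exists t, z = eang t.
Proof.
  intro H. destruct z as [x y]. unfold circ, Cmod in H. simpl in H.
  assert (E : x ^ 2 + y ^ 2 = 1).
  { apply (f_equal (fun r => r * r)) in H. rewrite sqrt_sqrt in H by nra. nra. }
  assert (Bx : -1 <= x <= 1) by nra.
  assert (Sy : sqrt (1 - x²) = Rabs y).
  { rewrite <- sqrt_Rsqr_abs. f_equal. unfold Rsqr. nra. }
  destruct (Rle_or_lt 0 y) as [Hy|Hy].
  - exists (acos x). unfold eang. rewrite cos_acos, sin_acos, Sy, Rabs_pos_eq; auto.
  - exists (- acos x). unfold eang. rewrite cos_neg, sin_neg, cos_acos, sin_acos, Sy, Rabs_left; auto.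
    f_equal. ring.
Qed.

Lemma polar z a : circ z -> exists t, a < t <= a + 2 * PI /\ z = eang t.
Proof.
  intro H. destruct (polar0 z H) as [t0 Ht0].
  pose proof PI_RGT_0.
  set (m := up ((a - t0) / (2 * PI))).
  destruct (archimed ((a - t0) / (2 * PI))) as [A1 A2]. fold m in A1, A2.
  exists (t0 + 2 * IZR m * PI). split.
  - split.
    + apply Rmult_gt_compat_r with (r := 2 * PI) in A1; [|lra].
      replace ((a - t0) / (2 * PI) * (2 * PI)) with (a - t0) in A1 by (field; lra). lra.
    + assert (IZR m <= (a - t0) / (2 * PI) + 1) by lra.
      apply Rmult_le_compat_r with (r := 2 * PI) in H1; [|lra].
      replace (((a - t0) / (2 * PI) + 1) * (2 * PI)) with (a - t0 + 2 * PI) in H1 by (field; lra). lra.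
  - rewrite Ht0. unfold eang. rewrite cos_periodZ, sin_periodZ. reflexivity.
Qed.

Lemma arc_char a l z : 0 < l < 2 * PI ->
  ((exists t, a < t /\ t < a + l /\ z = eang t) <-> (circ z /\ Delta (eang a) z (eang (a + l)) > 0)).
Proof.
  intros Hl. pose proof PI_RGT_0. split.
  - intros [t [H1 [H2 ->]]]. split. apply circ_eang. rewrite Delta_eang.
    assert (0 < sin ((t - a) / 2)) by (apply sin_gt_0; lra).
    assert (0 < sin ((a + l - t) / 2)) by (apply sin_gt_0; lra).
    assert (0 < sin ((a + l - a) / 2)) by (apply sin_gt_0; lra).
    apply Rlt_gt. repeat apply Rmult_lt_0_compat; lra.
  - intros [Hc HD]. destruct (polar z a Hc) as [t [[H1 H2] ->]].
    exists t. split; auto. split; auto.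
    rewrite Delta_eang in HD.
    assert (0 <= sin ((t - a) / 2)) by (apply sin_ge_0; lra).
    assert (0 < sin ((a + l - a) / 2)) by (apply sin_gt_0; lra).
    destruct (Rlt_or_le t (a + l)) as [|Hge]; auto. exfalso.
    assert (sin ((a + l - t) / 2) <= 0).
    { rewrite <- (Ropp_involutive ((a + l - t)/2)), sin_neg.
      assert (0 <= sin (- ((a + l - t) / 2))) by (apply sin_ge_0; lra). lra. }
    assert (sin ((t - a) / 2) * sin ((a + l - t) / 2) <= 0).
    { apply Rmult_le_0_l; auto. }
    nra.
Qed.

Lemma circ_coord z : circ z -> fst z * fst z + snd z * snd z = 1.
Proof.
  intro H. destruct z as [x y]. unfold circ, Cmod in H. simpl in *.
  apply (f_equal (fun r => r * r)) in H. rewrite sqrt_sqrt in H by nra. nra.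
Qed.

Lemma Delta_swap p z q : Delta q z p = - Delta p z q.
Proof. rewrite !Delta_coord. ring. Qed.

Lemma Delta_self p q : Delta p p q = 0.
Proof. rewrite Delta_coord. ring. Qed.

Lemma Delta_zero p z q : circ p -> circ z -> circ q -> p <> q -> Delta p z q = 0 -> z = p \/ z = q.
Proof.
  intros Hp Hz Hq Hpq HD. apply circ_coord in Hp, Hz, Hq. rewrite Delta_coord in HD.
  destruct p as [p1 p2], z as [z1 z2], q as [q1 q2]. simpl in *.
  set (v1 := q1 - p1) in *. set (v2 := q2 - p2) in *.
  set (N := v1 * v1 + v2 * v2).
  assert (HN : N > 0).
  { unfold N. destruct (Req_dec v1 0) as [E1|E1]; [destruct (Req_dec v2 0) as [E2|E2]|].
    - exfalso. apply Hpq. unfold v1, v2 in *. f_equal; lra.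
    - nra. - nra. }
  set (lam := ((z1 - p1) * v1 + (z2 - p2) * v2) / N).
  assert (U1 : z1 - p1 = lam * v1).
  { assert (E : ((z1 - p1) * v1 + (z2 - p2) * v2) * v1 = (z1 - p1) * N - v2 * ((z1 - p1) * v2 - (z2 - p2) * v1)) by (unfold N; ring).
    rewrite HD, Rmult_0_r, Rminus_0_r in E.
    unfold lam. replace (((z1 - p1) * v1 + (z2 - p2) * v2) / N * v1) with (((z1-p1)*v1+(z2-p2)*v2)*v1/N) by (field; lra).
    rewrite E. field. lra. }
  assert (U2 : z2 - p2 = lam * v2).
  { assert (E : ((z1 - p1) * v1 + (z2 - p2) * v2) * v2 = (z2 - p2) * N + v1 * ((z1 - p1) * v2 - (z2 - p2) * v1)) by (unfold N; ring).
    rewrite HD, Rmult_0_r, Rplus_0_r in E.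
    unfold lam. replace (((z1 - p1) * v1 + (z2 - p2) * v2) / N * v2) with (((z1-p1)*v1+(z2-p2)*v2)*v2/N) by (field; lra).
    rewrite E. field. lra. }
  assert (PV : p1 * v1 + p2 * v2 = - N / 2).
  { unfold N, v1, v2. field_simplify_eq. nra. }
  assert (L : lam * (lam - 1) * N = 0).
  { assert (z1 = p1 + lam * v1) by lra. assert (z2 = p2 + lam * v2) by lra.
    assert (lam * lam * N + 2 * lam * (p1 * v1 + p2 * v2) = 0).
    { unfold N. rewrite H, H0 in Hz. nra. }
    rewrite PV in H1. nra. }
  assert (lam * (lam - 1) = 0).
  { apply (Rmult_eq_reg_r N); lra. }
  destruct (Rmult_integral _ _ H) as [E|E].
  - left. f_equal. rewrite E in U1. lra. rewrite E in U2. lra.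
  - right. assert (lam = 1) by lra. rewrite H0 in U1, U2. f_equal. unfold v1 in U1. lra. unfold v2 in U2. lra.
Qed.

Lemma abs_sin_le x : Rabs (sin x) <= Rabs x.
Proof.
  pose proof PI_RGT_0. pose proof (SIN_bound x).
  destruct (Rtotal_order x 0) as [H1|[H1|H1]].
  - rewrite <- (Ropp_involutive x), sin_neg, !Rabs_Ropp.
    pose proof (sin_lt_x (-x) ltac:(lra)). 
    destruct (Rle_or_lt (-x) PI).
    + assert (0 <= sin (-x)) by (apply sin_ge_0; lra). rewrite (Rabs_pos_eq (sin (-x))) by lra. rewrite (Rabs_left x) by lra. lra.
    + pose proof (SIN_bound (-x)). pose proof PI2_1.
      unfold Rabs; repeat destruct Rcase_abs; lra.
  - subst. rewrite sin_0, Rabs_R0. lra.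
  - pose proof (sin_lt_x x ltac:(lra)).
    destruct (Rle_or_lt x PI).
    + assert (0 <= sin x) by (apply sin_ge_0; lra). rewrite !Rabs_pos_eq; lra.
    + pose proof PI2_1.
      unfold Rabs; repeat destruct Rcase_abs; lra.
Qed.

Lemma cos_diff_le c s : Rabs s <= 1 -> Rabs (cos (c + s) - cos c) <= 2 * Rabs s.
Proof.
  intro Hs. rewrite cos_plus.
  assert (E : cos s = 1 - 2 * sin (s/2) * sin (s/2)).
  { replace s with (2 * (s/2)) at 1 by field. rewrite cos_2a_sin. ring. }
  pose proof (abs_sin_le (s/2)). pose proof (abs_sin_le s).
  pose proof (COS_bound c). pose proof (SIN_bound c).
  assert (Rabs (1 - cos s) <= Rabs s).
  { rewrite E. replace (1 - (1 - 2 * sin (s / 2) * sin (s / 2))) with (2 * (sin (s/2) * sin (s/2))) by ring.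
    rewrite Rabs_mult, Rabs_pos_eq by lra. rewrite Rabs_mult.
    replace (Rabs (s/2)) with (Rabs s / 2) in H by (unfold Rdiv; rewrite Rabs_mult, Rabs_inv, (Rabs_pos_eq 2) by lra; reflexivity).
    pose proof (Rabs_pos (sin (s/2))).
    assert (Rabs (sin (s/2)) * Rabs (sin (s/2)) <= (Rabs s / 2) * (Rabs s / 2)) by (apply Rmult_le_compat; lra).
    pose proof (Rabs_pos s). nra. }
  replace (cos c * cos s - sin c * sin s - cos c) with (- (cos c * (1 - cos s)) - sin c * sin s) by ring.
  eapply Rle_trans. apply Rabs_triang. rewrite ?Rabs_Ropp, !Rabs_mult.
  assert (Rabs (cos c) <= 1) by (apply Rabs_le; lra). assert (Rabs (sin c) <= 1) by (apply Rabs_le; lra).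
  pose proof (Rabs_pos (1 - cos s)). pose proof (Rabs_pos (sin s)).
  pose proof (Rabs_pos (cos c)). pose proof (Rabs_pos (sin c)). nra.
Qed.

Lemma sin_diff_le c s : Rabs s <= 1 -> Rabs (sin (c + s) - sin c) <= 2 * Rabs s.
Proof.
  intro Hs. rewrite sin_plus.
  assert (E : cos s = 1 - 2 * sin (s/2) * sin (s/2)).
  { replace s with (2 * (s/2)) at 1 by field. rewrite cos_2a_sin. ring. }
  pose proof (abs_sin_le (s/2)). pose proof (abs_sin_le s).
  pose proof (COS_bound c). pose proof (SIN_bound c).
  assert (Rabs (1 - cos s) <= Rabs s).
  { rewrite E. replace (1 - (1 - 2 * sin (s / 2) * sin (s / 2))) with (2 * (sin (s/2) * sin (s/2))) by ring.
    rewrite Rabs_mult, Rabs_pos_eq by lra. rewrite Rabs_mult.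
    replace (Rabs (s/2)) with (Rabs s / 2) in H by (unfold Rdiv; rewrite Rabs_mult, Rabs_inv, (Rabs_pos_eq 2) by lra; reflexivity).
    pose proof (Rabs_pos (sin (s/2))).
    assert (Rabs (sin (s/2)) * Rabs (sin (s/2)) <= (Rabs s / 2) * (Rabs s / 2)) by (apply Rmult_le_compat; lra).
    pose proof (Rabs_pos s). nra. }
  replace (sin c * cos s + cos c * sin s - sin c) with (- (sin c * (1 - cos s)) + cos c * sin s) by ring.
  eapply Rle_trans. apply Rabs_triang. rewrite ?Rabs_Ropp, !Rabs_mult.
  assert (Rabs (cos c) <= 1) by (apply Rabs_le; lra). assert (Rabs (sin c) <= 1) by (apply Rabs_le; lra).
  pose proof (Rabs_pos (1 - cos s)). pose proof (Rabs_pos (sin s)).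
  pose proof (Rabs_pos (cos c)). pose proof (Rabs_pos (sin c)). nra.
Qed.

Lemma Delta_lip p q w w' : circ p -> circ q ->
  Rabs (Delta p w q - Delta p w' q) <= 2 * (Rabs (fst w - fst w') + Rabs (snd w - snd w')).
Proof.
  intros Hp Hq. apply circ_coord in Hp, Hq. rewrite !Delta_coord.
  destruct p as [p1 p2], q as [q1 q2], w as [w1 w2], w' as [x1 x2]. simpl in *.
  replace ((w1 - p1) * (q2 - p2) - (w2 - p2) * (q1 - p1) - ((x1 - p1) * (q2 - p2) - (x2 - p2) * (q1 - p1)))
    with ((w1 - x1) * (q2 - p2) - (w2 - x2) * (q1 - p1)) by ring.
  assert (-1 <= q1 <= 1) by (split; nra). assert (-1 <= q2 <= 1) by (split; nra).
  assert (-1 <= p1 <= 1) by (split; nra). assert (-1 <= p2 <= 1) by (split; nra).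
  assert (Rabs (q2 - p2) <= 2) by (apply Rabs_le; split; lra).
  assert (Rabs (q1 - p1) <= 2) by (apply Rabs_le; split; lra).
  unfold Rminus at 1. eapply Rle_trans. apply Rabs_triang. rewrite Rabs_Ropp, !Rabs_mult.
  pose proof (Rabs_pos (w1 - x1)). pose proof (Rabs_pos (w2 - x2)).
  pose proof (Rabs_pos (q2 - p2)). pose proof (Rabs_pos (q1 - p1)). nra.
Qed.

Lemma Delta_near p q c sg L : circ p -> circ q -> 0 < L -> (sg = 1 \/ sg = -1) ->
  (forall s, 0 < s < L -> Delta p (eang (c + sg * s)) q > 0) -> Delta p (eang c) q >= 0.
Proof.
  intros Hp Hq HL Hsg H. apply Rnot_lt_ge. intro Hd.
  set (d := Delta p (eang c) q) in *.
  set (s := Rmin (L/2) (Rmin (1/2) (- d / 16))).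
  assert (Hs0 : 0 < s) by (unfold s; repeat apply Rmin_glb_lt; lra).
  assert (Hs1 : s <= L/2) by apply Rmin_l.
  assert (Hs2 : s <= 1/2) by (eapply Rle_trans; [apply Rmin_r | apply Rmin_l]).
  assert (Hs3 : s <= - d / 16) by (eapply Rle_trans; [apply Rmin_r | apply Rmin_r]).
  specialize (H s ltac:(lra)).
  pose proof (Delta_lip p q (eang (c + sg * s)) (eang c) Hp Hq) as Hl.
  fold d in Hl. set (D1 := Delta p (eang (c + sg * s)) q) in *.
  unfold eang in Hl; simpl in Hl.
  assert (Ha : Rabs (sg * s) = s) by (destruct Hsg; subst; [replace (1 * s) with s by ring | replace (-1 * s) with (- s) by ring; rewrite Rabs_Ropp]; apply Rabs_pos_eq; lra).
  pose proof (cos_diff_le c (sg * s) ltac:(lra)). pose proof (sin_diff_le c (sg * s) ltac:(lra)).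
  rewrite Ha in *.
  apply Rabs_le_between in Hl. lra.
Qed.

Lemma eang_2PI a : eang (a + 2 * PI) = eang a.
Proof.
  unfold eang. replace (a + 2 * PI) with (a + 2 * IZR 1 * PI) by (simpl; ring).
  rewrite cos_periodZ, sin_periodZ. reflexivity.
Qed.

Lemma ends_unique p q p' q' : circ p -> circ q -> circ p' -> circ q' -> p <> q -> p' <> q' ->
  (forall z, circ z -> (Delta p z q > 0 <-> Delta p' z q' > 0)) -> p = p' /\ q = q'.
Proof.
  intros Hp Hq Hp' Hq' Hpq Hpq' Heq.
  pose proof PI_RGT_0.
  destruct (polar p 0 Hp) as [a [_ Ea]].
  destruct (polar q a Hq) as [b [[Hb1 Hb2] Eb]].
  assert (Hb3 : b < a + 2 * PI).
  { destruct Hb2 as [|E]; auto. exfalso. apply Hpq. rewrite Ea, Eb, E. symmetry. apply eang_2PI. }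
  set (l := b - a). assert (Hl : 0 < l < 2 * PI) by (unfold l; lra).
  assert (Eb' : q = eang (a + l)) by (rewrite Eb; unfold l; f_equal; ring).
  assert (inarc : forall t, a < t < a + l -> Delta p' (eang t) q' > 0).
  { intros t Ht. apply Heq. apply circ_eang. rewrite Ea, Eb'.
    apply (proj1 (arc_char a l (eang t) Hl)). exists t. repeat split; lra. }
  assert (P0 : Delta p' p q' = 0).
  { assert (Delta p' p q' >= 0).
    { rewrite Ea. apply (Delta_near _ _ a 1 l Hp' Hq' ltac:(lra) ltac:(auto)).
      intros s Hs. apply inarc. lra. }
    assert (~ Delta p' p q' > 0).
    { intro G. apply Heq in G; auto. rewrite Delta_self in G. lra. }
    lra. }
  assert (Q0 : Delta p' q q' = 0).
  { assert (Delta p' q q' >= 0).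
    { rewrite Eb'. apply (Delta_near _ _ (a + l) (-1) l Hp' Hq' ltac:(lra) ltac:(auto)).
      intros s Hs. apply inarc. lra. }
    assert (~ Delta p' q q' > 0).
    { intro G. apply Heq in G; auto. rewrite Delta_swap, Delta_self in G. lra. }
    lra. }
  destruct (Delta_zero _ _ _ Hp' Hp Hq' Hpq' P0) as [E1|E1];
  destruct (Delta_zero _ _ _ Hp' Hq Hq' Hpq' Q0) as [E2|E2].
  - exfalso. apply Hpq. congruence.
  - auto.
  - exfalso. subst p q.
    assert (M : Delta p' (eang (a + l / 2)) q' > 0) by (apply inarc; lra).
    assert (M' : Delta (eang a) (eang (a + l / 2)) (eang b) > 0) by (apply Heq; [apply circ_eang | exact M]).
    rewrite E1, E2, Delta_swap in M'. lra.
  - exfalso. apply Hpq. congruence.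
Qed.


Definition arc_data (I : cset) (p q : C) : Prop :=
  circ p /\ circ q /\ p <> q /\ (exists z, I z) /\
  forall z, I z <-> (circ z /\ Delta p z q > 0).

Lemma Delta_pp p z : Delta p z p = 0.
Proof. rewrite Delta_coord. ring. Qed.

Lemma inK_data I : inK I -> exists p q, arc_data I p q.
Proof.
  intros [a [l [H1 [H2 H]]]]. pose proof PI_RGT_0.
  exists (eang a), (eang (a + l)).
  assert (Hz : forall z, I z <-> circ z /\ Delta (eang a) z (eang (a + l)) > 0).
  { intro z. rewrite H. apply arc_char. lra. }
  assert (Hm : I (eang (a + l / 2))) by (apply H; exists (a + l/2); repeat split; lra).
  split; [apply circ_eang|]. split; [apply circ_eang|]. split.
  - intro E. apply Hz in Hm. destruct Hm as [_ Hm]. rewrite E, Delta_pp in Hm. lra.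
  - split; [exists (eang (a + l / 2)); auto | auto].
Qed.

Lemma Dn_mod_pos al be z : is_mob al be -> circ z -> 0 < Cmod (Dn al be z) ^ 2.
Proof. intros. apply pow_lt. apply Cmod_gt_0. apply Dn_nz; auto. Qed.

Lemma mob_inj al be z w : is_mob al be -> circ z -> circ w -> mob al be z = mob al be w -> z = w.
Proof.
  intros Hm Hz Hw E. rewrite <- (mob_inv_l al be z), <- (mob_inv_l al be w) by auto. rewrite E. auto.
Qed.

Lemma img_arc al be I p q : is_mob al be -> arc_data I p q ->
  arc_data (img (mob al be) I) (mob al be p) (mob al be q).
Proof.
  intros Hm [Hp [Hq [Hpq [[z0 Hz0] HI]]]].
  split; [apply mob_circ; auto|]. split; [apply mob_circ; auto|]. split.
  { intro E. apply Hpq. eapply mob_inj; eauto. }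
  split. { exists (mob al be z0). exists z0. auto. }
  intro z. split.
  - intros [w [Hw ->]]. apply HI in Hw. destruct Hw as [Hwc Hwd].
    split. apply mob_circ; auto.
    pose proof (Delta_mob al be p w q Hm Hp Hwc Hq) as E.
    pose proof (Dn_mod_pos al be w Hm Hwc). pose proof (Dn_mod_pos al be p Hm Hp).
    pose proof (Dn_mod_pos al be q Hm Hq).
    set (K := Cmod (Dn al be w) ^ 2 * Cmod (Dn al be p) ^ 2 * Cmod (Dn al be q) ^ 2) in *.
    assert (0 < K) by (unfold K; apply Rmult_lt_0_compat; [apply Rmult_lt_0_compat|]; auto).
    apply Rlt_gt. apply (Rmult_lt_reg_r K); auto. rewrite E. lra.
  - intros [Hzc Hzd]. set (w := mob (Cconj al) (- be)%C z).
    assert (Hwc : circ w) by (apply mob_circ; auto; apply is_mob_inv; auto).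
    assert (Ew : mob al be w = z) by (apply mob_inv_r; auto).
    exists w. split; auto. apply HI. split; auto.
    pose proof (Delta_mob al be p w q Hm Hp Hwc Hq) as E. rewrite Ew in E. rewrite <- E.
    pose proof (Dn_mod_pos al be w Hm Hwc). pose proof (Dn_mod_pos al be p Hm Hp).
    pose proof (Dn_mod_pos al be q Hm Hq).
    apply Rlt_gt. apply Rmult_lt_0_compat; [|apply Rmult_lt_0_compat; [apply Rmult_lt_0_compat|]]; auto.
Qed.

Lemma data_unique I I' p q p' q' : arc_data I p q -> arc_data I' p' q' ->
  (forall z, I z <-> I' z) -> p = p' /\ q = q'.
Proof.
  intros [Hp [Hq [Hpq [_ HI]]]] [Hp' [Hq' [Hpq' [_ HI']]]] E.
  apply ends_unique; auto. intros z Hz. split; intro G.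
  - assert (I z) by (apply HI; auto). apply E in H. apply HI' in H. tauto.
  - assert (I' z) by (apply HI'; auto). apply E in H. apply HI in H. tauto.
Qed.

(* same endpoints => same set ; reversed endpoints impossible under inclusion *)
Lemma sub_arc_3pts I J p q p' q' : arc_data I p q -> arc_data J p' q' ->
  subset J I -> ~ same_set I J ->
  (p' <> p /\ p' <> q) \/ (q' <> p /\ q' <> q).
Proof.
  intros DI DJ Hs Hn.
  destruct (classic (p' <> p /\ p' <> q)) as [|H1]; auto.
  destruct (classic (q' <> p /\ q' <> q)) as [|H2]; auto.
  exfalso.
  destruct DI as [Hp [Hq [Hpq [[z0 Hz0] HI]]]]. destruct DJ as [Hp' [Hq' [Hpq' [[w0 Hw0] HJ]]]].
  assert (A1 : p' = p \/ p' = q) by (apply NNPP; intro; apply H1; split; intro; subst; tauto).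
  assert (A2 : q' = p \/ q' = q) by (apply NNPP; intro; apply H2; split; intro; subst; tauto).
  destruct A1 as [->| ->]; destruct A2 as [->| ->].
  - auto.
  - apply Hn. intro z. rewrite HI, HJ. tauto.
  - assert (I w0) by (apply Hs; auto). apply HI in H. apply HJ in Hw0.
    rewrite Delta_swap in Hw0. lra.
  - auto.
Qed.

Definition good (b : simplex1) : Prop := is_simplex1 b /\ ~ degenerate b.

Lemma endpoints_agree al be ga de I p q : is_mob al be -> is_mob ga de -> arc_data I p q ->
  img (mob al be) I = img (mob ga de) I -> mob al be p = mob ga de p /\ mob al be q = mob ga de q.
Proof.
  intros H1 H2 D E. eapply data_unique.
  apply (img_arc _ _ _ _ _ H1 D). apply (img_arc _ _ _ _ _ H2 D).
  intro z. rewrite E. tauto.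
Qed.

Lemma agree_J al be ga de S J p q p' q' : is_mob al be -> is_mob ga de ->
  arc_data S p q -> arc_data J p' q' -> subset J S -> ~ same_set S J ->
  mob al be p = mob ga de p -> mob al be q = mob ga de q ->
  mob al be p' = mob ga de p' -> mob al be q' = mob ga de q' ->
  forall z, circ z -> mob al be z = mob ga de z.
Proof.
  intros H1 H2 DS DJ Hs Hn Ep Eq Ep' Eq'.
  pose proof DS as [Hp [Hq [Hpq _]]]. pose proof DJ as [Hp' [Hq' _]].
  destruct (sub_arc_3pts _ _ _ _ _ _ DS DJ Hs Hn) as [[N1 N2]|[N1 N2]].
  - apply (mob_agree3 al be ga de p q p'); auto.
  - apply (mob_agree3 al be ga de p q q'); auto.
Qed.

Lemma stab b0 al be ga de : good b0 -> is_mob al be -> is_mob ga de ->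
  act_simplex (mob al be) b0 = act_simplex (mob ga de) b0 ->
  forall z, circ z -> mob al be z = mob ga de z.
Proof.
  intros [[HS [HA [HB [HAS HBS]]]] Hnd] H1 H2 E.
  destruct b0 as [S A B]. simpl in *. unfold act_simplex in E. simpl in E.
  injection E as ES EA EB.
  destruct (inK_data _ HS) as [p [q DS]].
  destruct (inK_data _ HA) as [pa [qa DA]].
  destruct (inK_data _ HB) as [pb [qb DB]].
  destruct (endpoints_agree _ _ _ _ _ _ _ H1 H2 DS ES) as [Ep Eq].
  destruct (endpoints_agree _ _ _ _ _ _ _ H1 H2 DA EA) as [Epa Eqa].
  destruct (endpoints_agree _ _ _ _ _ _ _ H1 H2 DB EB) as [Epb Eqb].
  unfold degenerate in Hnd. simpl in Hnd.
  destruct (classic (same_set S A)) as [SA|SA].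
  - assert (~ same_set S B).
    { intro SB. apply Hnd. split; auto. intro z. rewrite <- (SA z). apply SB. }
    eapply (agree_J al be ga de S B); eauto.
  - eapply (agree_J al be ga de S A); eauto.
Qed.


Fixpoint Cn (n : nat) (f : R -> R) : Prop :=
  match n with
  | O => True
  | S n => (forall t, ex_derive f t) /\ Cn n (Derive f)
  end.

Lemma Cn_ext n f g : (forall t, f t = g t) -> Cn n f -> Cn n g.
Proof.
  revert f g. induction n as [|n IH]; intros f g E H; simpl in *; auto.
  destruct H as [H1 H2]. split.
  - intro t. apply (ex_derive_ext f); auto.
  - apply (IH (Derive f)); auto. intro t. apply Derive_ext. auto.
Qed.

Lemma Cn_S n f : Cn (S n) f -> Cn n f.
Proof.
  revert f. induction n as [|n IH]; intros f H. simpl; auto.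
  simpl in H. destruct H as [H1 H2]. simpl. split; auto.
Qed.

Lemma Cn_const n c : Cn n (fun _ => c).
Proof.
  induction n as [|n IH]; simpl; auto. split.
  - intro; apply ex_derive_const.
  - apply (Cn_ext n (fun _ => 0)). intro t. rewrite Derive_const. auto.
    clear IH. induction n; simpl; auto. split. intro; apply ex_derive_const.
    apply (Cn_ext n (fun _ => 0)); auto. intro t. rewrite Derive_const. auto.
Qed.

Lemma Cn_plus n f g : Cn n f -> Cn n g -> Cn n (fun t => f t + g t).
Proof.
  revert f g. induction n as [|n IH]; intros f g Hf Hg; simpl in *; auto.
  destruct Hf as [F1 F2], Hg as [G1 G2]. split.
  - intro t. apply (ex_derive_plus f g); auto.
  - apply (Cn_ext n (fun t => Derive f t + Derive g t)).
    intro t. rewrite Derive_plus; auto. apply IH; auto.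
Qed.

Lemma Cn_mult n f g : Cn n f -> Cn n g -> Cn n (fun t => f t * g t).
Proof.
  revert f g. induction n as [|n IH]; intros f g Hf Hg; simpl in *; auto.
  pose proof (Cn_S n f (conj (proj1 Hf) (proj2 Hf))) as Hf'.
  pose proof (Cn_S n g (conj (proj1 Hg) (proj2 Hg))) as Hg'.
  destruct Hf as [F1 F2], Hg as [G1 G2]. split.
  - intro t. apply ex_derive_mult; auto.
  - apply (Cn_ext n (fun t => Derive f t * g t + f t * Derive g t)).
    intro t. rewrite Derive_mult; auto.
    apply Cn_plus; apply IH; auto.
Qed.

Lemma Cn_scal n c f : Cn n f -> Cn n (fun t => c * f t).
Proof. intro H. apply Cn_mult; auto. apply Cn_const. Qed.

Lemma Cn_id n : Cn n (fun t => t).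
Proof.
  destruct n; simpl; auto. split. intro; apply ex_derive_id.
  apply (Cn_ext n (fun _ => 1)). intro t. symmetry. apply (Derive_id t). apply Cn_const.
Qed.

Lemma Cn_inv n f : Cn n f -> (forall t, f t <> 0) -> Cn n (fun t => / f t).
Proof.
  revert f. induction n as [|n IH]; intros f Hf Hnz; simpl in *; auto.
  pose proof (Cn_S n f (conj (proj1 Hf) (proj2 Hf))) as Hf'.
  destruct Hf as [F1 F2]. split.
  - intro t. apply ex_derive_inv; auto.
  - apply (Cn_ext n (fun t => (-1) * (Derive f t * (/ f t * / f t)))).
    intro t. rewrite Derive_inv; auto. field. auto.
    apply Cn_scal. apply Cn_mult; auto. apply Cn_mult; apply IH; auto.
Qed.

Lemma Cn_comp n h g : Cn n h -> Cn n g -> Cn n (fun t => h (g t)).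
Proof.
  revert h g. induction n as [|n IH]; intros h g Hh Hg; simpl in *; auto.
  pose proof (Cn_S n g (conj (proj1 Hg) (proj2 Hg))) as Hg'.
  destruct Hh as [H1 H2], Hg as [G1 G2]. split.
  - intro t. apply (ex_derive_comp h g); auto.
  - apply (Cn_ext n (fun t => Derive g t * Derive h (g t))).
    intro t. symmetry. apply Derive_comp; auto.
    apply Cn_mult; auto.
Qed.

Lemma Cn_cos_sin n : Cn n cos /\ Cn n sin.
Proof.
  induction n as [|n IH]; simpl; auto. destruct IH as [Hc Hs]. split; split.
  - intro t. eexists. apply is_derive_cos.
  - apply (Cn_ext n (fun t => (-1) * sin t)). intro t. rewrite (is_derive_unique _ _ _ (is_derive_cos t)). ring.
    apply Cn_scal; auto.
  - intro t. eexists. apply is_derive_sin.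
  - apply (Cn_ext n cos). intro t. rewrite (is_derive_unique _ _ _ (is_derive_sin t)). auto. auto.
Qed.

Lemma Cn_smooth f : (forall n, Cn n f) -> forall n t, ex_derive_n f n t.
Proof.
  intros H n. destruct n as [|n]; simpl; auto.
  specialize (H (S n)). revert f H. induction n as [|n IH]; intros f H t.
  - simpl in H. simpl. apply (ex_derive_ext f). auto. apply H.
  - simpl in H. destruct H as [H1 H2].
    assert (G : forall t, ex_derive (Derive_n (Derive f) n) t) by (apply IH; auto).
    apply (ex_derive_ext (Derive_n (Derive f) n)); auto.
    intro s. change (Derive_n (Derive_n f 1) n s = Derive_n f (S n) s).
    rewrite Derive_n_comp. f_equal. lia.
Qed.


Definition mk (k : nat) (x : R) : R :=
  match Rlt_dec 0 x with left _ => (/ x) ^ k * exp (- / x) | right _ => 0 end.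

Lemma exp_mult_nat m a : exp (INR m * a) = exp a ^ m.
Proof.
  induction m as [|m IH]. simpl. rewrite Rmult_0_l. apply exp_0.
  rewrite S_INR, Rmult_plus_distr_r, Rmult_1_l, exp_plus, IH. simpl. ring.
Qed.

Lemma exp_pow_ge y n : 0 <= y -> (y / INR (S n)) ^ (S n) <= exp y.
Proof.
  intro Hy. assert (HN : 0 < INR (S n)) by (apply lt_0_INR; lia).
  replace y with (INR (S n) * (y / INR (S n))) at 2 by (field; lra).
  rewrite exp_mult_nat. apply pow_incr. split.
  - apply Rmult_le_pos; auto. left. apply Rinv_0_lt_compat; auto.
  - destruct (Req_dec (y / INR (S n)) 0) as [E|E].
    + rewrite E. left. apply exp_pos.
    + pose proof (exp_ineq1 _ E). lra.
Qed.

Lemma mk_bound k h : 0 < h -> mk k h / h <= INR (S (S k)) ^ (S (S k)) * h.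
Proof.
  intro Hh. unfold mk. destruct (Rlt_dec 0 h) as [_|C]; [|lra].
  set (N := S (S k)). set (y := / h).
  assert (Hy : 0 < y) by (apply Rinv_0_lt_compat; auto).
  assert (HN : 0 < INR N) by (apply lt_0_INR; unfold N; lia).
  pose proof (exp_pow_ge y (S k) (Rlt_le _ _ Hy)) as E. fold N in E.
  assert (E' : exp (- y) <= INR N ^ N / y ^ N).
  { rewrite exp_Ropp. replace (y / INR N) with (y * / INR N) in E by reflexivity.
    rewrite Rpow_mult_distr, pow_inv in E.
    assert (0 < y ^ N) by (apply pow_lt; auto). assert (0 < INR N ^ N) by (apply pow_lt; auto).
    assert (0 < exp y) by apply exp_pos.
    apply (Rmult_le_reg_r (exp y * y ^ N / INR N ^ N)).
    { apply Rmult_lt_0_compat; [apply Rmult_lt_0_compat|apply Rinv_0_lt_compat]; auto. }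
    replace (/ exp y * (exp y * y ^ N / INR N ^ N)) with (y ^ N / INR N ^ N) by (field; lra).
    replace (INR N ^ N / y ^ N * (exp y * y ^ N / INR N ^ N)) with (exp y) by (field; lra).
    replace (y ^ N / INR N ^ N) with (y ^ N * / INR N ^ N) by reflexivity. exact E. }
  assert (Hh' : h = / y) by (unfold y; rewrite Rinv_inv; auto).
  rewrite Hh'. unfold Rdiv. rewrite Rinv_inv.
  assert (0 < y ^ k) by (apply pow_lt; auto).
  apply Rle_trans with (y ^ k * (INR N ^ N / y ^ N) * y).
  { apply Rmult_le_compat_r; [lra|]. apply Rmult_le_compat_l; lra. }
  unfold N. simpl. right. field. lra.
Qed.

Lemma mk_derive k x : is_derive (mk k) x (- INR k * mk (S k) x + mk (S (S k)) x).
Proof.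
  destruct (Rtotal_order x 0) as [Hx|[Hx|Hx]].
  - apply (is_derive_ext_loc (fun _ => 0)).
    + apply filter_imp with (fun t => t < 0). intros t Ht. unfold mk.
      destruct (Rlt_dec 0 t); [lra|auto]. apply open_lt; auto.
    + unfold mk. destruct (Rlt_dec 0 x); [lra|]. replace (- INR k * 0 + 0) with 0 by ring.
      apply is_derive_Reals. apply derivable_pt_lim_const.
  - subst x. apply is_derive_Reals. unfold mk at 2 3.
    destruct (Rlt_dec 0 0); [lra|]. replace (- INR k * 0 + 0) with 0 by ring.
    intros eps Heps.
    set (Cst := INR (S (S k)) ^ (S (S k))).
    assert (HC : 0 < Cst) by (apply pow_lt; apply lt_0_INR; lia).
    exists (mkposreal (eps / (Cst + 1)) ltac:(apply Rdiv_lt_0_compat; lra)). simpl.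
    intros h Hh Hhd. rewrite Rplus_0_l, Rminus_0_r. replace (mk k 0) with 0 by (unfold mk; destruct (Rlt_dec 0 0); [lra|auto]). rewrite Rminus_0_r.
    destruct (Rlt_dec 0 h) as [Hp|Hn].
    + pose proof (mk_bound k h Hp) as B. fold Cst in B.
      assert (0 <= mk k h / h).
      { unfold mk. destruct (Rlt_dec 0 h); [|lra]. apply Rdiv_le_0_compat; auto.
        apply Rmult_le_pos; [apply pow_le; left; apply Rinv_0_lt_compat; auto | left; apply exp_pos]. }
      rewrite Rabs_pos_eq by auto. rewrite Rabs_pos_eq in Hhd by lra.
      apply Rle_lt_trans with (Cst * h); auto.
      apply Rlt_le_trans with (Cst * (eps / (Cst + 1))). apply Rmult_lt_compat_l; auto.
      apply (Rmult_le_reg_r (Cst + 1)); [lra|]. field_simplify; [|lra]. nra.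
    + unfold mk. destruct (Rlt_dec 0 h); [lra|]. unfold Rdiv. rewrite Rmult_0_l, Rabs_R0. auto.
  - apply (is_derive_ext_loc (fun t => (/ t) ^ k * exp (- / t))).
    + apply filter_imp with (fun t => 0 < t). intros t Ht. unfold mk.
      destruct (Rlt_dec 0 t); [auto|lra]. apply open_gt; auto.
    + unfold mk. destruct (Rlt_dec 0 x); [|lra].
      auto_derive. split; [lra|split; [lra|auto]].
      destruct k; simpl; field; lra.
Qed.

Lemma mk_smooth n : forall k, Cn n (mk k).
Proof.
  induction n as [|n IH]; intro k; simpl; auto. split.
  - intro t. eexists. apply mk_derive.
  - apply (Cn_ext n (fun t => - INR k * mk (S k) t + mk (S (S k)) t)).
    intro t. symmetry. apply is_derive_unique. apply mk_derive.
    apply Cn_plus; auto. apply Cn_scal; auto.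
Qed.

Definition psi : R -> R := mk 0.

Lemma psi_nonneg x : 0 <= psi x.
Proof. unfold psi, mk. destruct (Rlt_dec 0 x). simpl. rewrite Rmult_1_l. left; apply exp_pos. lra. Qed.

Lemma psi_pos x : 0 < x -> 0 < psi x.
Proof. intro H. unfold psi, mk. destruct (Rlt_dec 0 x); [|lra]. simpl. rewrite Rmult_1_l. apply exp_pos. Qed.

Lemma psi_zero x : x <= 0 -> psi x = 0.
Proof. intro H. unfold psi, mk. destruct (Rlt_dec 0 x); [lra|auto]. Qed.

Lemma psi_smooth n : Cn n psi.
Proof. apply mk_smooth. Qed.


Definition CCn (n : nat) (w : R -> C) : Prop :=
  Cn n (fun t => fst (w t)) /\ Cn n (fun t => snd (w t)).

Lemma CCn_ext n w w' : (forall t, w t = w' t) -> CCn n w -> CCn n w'.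
Proof. intros E [H1 H2]. split; [apply (Cn_ext n (fun t => fst (w t))) | apply (Cn_ext n (fun t => snd (w t)))]; auto; intro t; rewrite E; auto. Qed.

Lemma CCn_const n c : CCn n (fun _ => c).
Proof. split; apply Cn_const. Qed.

Lemma CCn_eang n : CCn n eang.
Proof. destruct (Cn_cos_sin n). split; simpl; auto. Qed.

Lemma CCn_plus n u v : CCn n u -> CCn n v -> CCn n (fun t => (u t + v t)%C).
Proof. intros [U1 U2] [V1 V2]. split; simpl; apply Cn_plus; auto. Qed.

Lemma Cn_minus n f g : Cn n f -> Cn n g -> Cn n (fun t => f t - g t).
Proof. intros. apply (Cn_ext n (fun t => f t + (-1) * g t)). intro; ring. apply Cn_plus; auto. apply Cn_scal; auto. Qed.

Lemma CCn_mult n u v : CCn n u -> CCn n v -> CCn n (fun t => (u t * v t)%C).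
Proof.
  intros [U1 U2] [V1 V2]. split; simpl.
  - apply Cn_minus; apply Cn_mult; auto.
  - apply Cn_plus; apply Cn_mult; auto.
Qed.

Lemma CCn_inv n u : CCn n u -> (forall t, u t <> 0%C) -> CCn n (fun t => (/ u t)%C).
Proof.
  intros [U1 U2] Hnz.
  assert (P : forall t, fst (u t) ^ 2 + snd (u t) ^ 2 <> 0).
  { intros t E. apply (Hnz t). destruct (u t) as [a b]. simpl in E.
    assert (a = 0) by nra. assert (b = 0) by nra. subst. reflexivity. }
  assert (Q : Cn n (fun t => / (fst (u t) ^ 2 + snd (u t) ^ 2))).
  { apply Cn_inv; auto. apply Cn_plus; simpl; apply Cn_mult; auto; apply Cn_mult; auto; apply Cn_const. }
  split; simpl.
  - apply (Cn_ext n (fun t => fst (u t) * / (fst (u t) ^ 2 + snd (u t) ^ 2))). intro; reflexivity.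
    apply Cn_mult; auto.
  - apply (Cn_ext n (fun t => (-1) * snd (u t) * / (fst (u t) ^ 2 + snd (u t) ^ 2))). intro; unfold Cinv; simpl; unfold Rdiv; ring.
    apply Cn_mult; auto. apply Cn_scal; auto.
Qed.

Lemma CCn_mob n al be u : is_mob al be -> CCn n u -> (forall t, circ (u t)) ->
  CCn n (fun t => mob al be (u t)).
Proof.
  intros Hm Hu Hc. unfold mob, Cdiv.
  apply CCn_mult. apply CCn_plus; [apply CCn_mult; [apply CCn_const|auto] | apply CCn_const].
  apply CCn_inv. apply CCn_plus; [apply CCn_mult; [apply CCn_const|auto] | apply CCn_const].
  intro t. apply (Dn_nz al be (u t) Hm (Hc t)).
Qed.

Lemma Cn_Delta n p q u : CCn n u -> Cn n (fun t => Delta p (u t) q).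
Proof.
  intros [U1 U2]. apply (Cn_ext n (fun t => (fst (u t) - fst p) * (snd q - snd p) - (snd (u t) - snd p) * (fst q - fst p))).
  intro t. symmetry. apply Delta_coord.
  apply Cn_minus; apply Cn_mult; try apply Cn_const; apply Cn_minus; auto; apply Cn_const.
Qed.


Definition on_circ (b : simplex1) : Prop :=
  (forall z, supp b z -> circ z) /\ (forall z, bd0 b z -> circ z) /\ (forall z, bd1 b z -> circ z).

Lemma inK_circ I z : inK I -> I z -> circ z.
Proof. intros H Hz. destruct (inK_data I H) as [p [q [_ [_ [_ [_ HI]]]]]]. apply HI in Hz. tauto. Qed.

Lemma simplex_on_circ b : is_simplex1 b -> on_circ b.
Proof.
  intros [H1 [H2 [H3 _]]]. split; [|split]; intro z; apply inK_circ; auto.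
Qed.

Lemma img_comp al be ga de (S : cset) : is_mob al be -> is_mob ga de -> (forall z, S z -> circ z) ->
  img (mob al be) (img (mob ga de) S) = img (mob (comp_al al be ga de) (comp_be al be ga de)) S.
Proof.
  intros H1 H2 HS. apply functional_extensionality. intro z. apply propositional_extensionality.
  split.
  - intros [w [[u [Hu ->]] ->]]. exists u. split; auto. apply mob_comp; auto.
  - intros [u [Hu ->]]. exists (mob ga de u). split. exists u; auto. symmetry. apply mob_comp; auto.
Qed.

Lemma img_inv al be (S : cset) : is_mob al be -> (forall z, S z -> circ z) ->
  img (mob (Cconj al) (- be)%C) (img (mob al be) S) = S.
Proof.
  intros H HS. apply functional_extensionality. intro z. apply propositional_extensionality.
  split.
  - intros [w [[u [Hu ->]] ->]]. rewrite mob_inv_l; auto.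
  - intro Hz. exists (mob al be z). split. exists z; auto. rewrite mob_inv_l; auto.
Qed.

Lemma img_id (S : cset) : img (mob 1%C 0%C) S = S.
Proof.
  apply functional_extensionality. intro z. apply propositional_extensionality.
  split. intros [w [Hw ->]]. rewrite mob_id. auto. intro Hz. exists z. rewrite mob_id. auto.
Qed.

Lemma act_comp al be ga de b : is_mob al be -> is_mob ga de -> on_circ b ->
  act_simplex (mob al be) (act_simplex (mob ga de) b) =
  act_simplex (mob (comp_al al be ga de) (comp_be al be ga de)) b.
Proof.
  intros H1 H2 [C1 [C2 C3]]. destruct b as [S A B]. unfold act_simplex. simpl in *.
  rewrite !img_comp; auto.
Qed.

Lemma act_inv al be b : is_mob al be -> on_circ b ->
  act_simplex (mob (Cconj al) (- be)%C) (act_simplex (mob al be) b) = b.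
Proof.
  intros H [C1 [C2 C3]]. destruct b as [S A B]. unfold act_simplex. simpl in *.
  rewrite !img_inv; auto.
Qed.

Lemma act_id b : act_simplex (mob 1%C 0%C) b = b.
Proof. destruct b. unfold act_simplex. simpl. rewrite !img_id. auto. Qed.

Lemma good_on_circ b : good b -> on_circ b.
Proof. intros [H _]. apply simplex_on_circ; auto. Qed.

Definition Rel (b' b : simplex1) : Prop :=
  exists al be, is_mob al be /\ act_simplex (mob al be) b' = b.

Definition Orb (b : simplex1) : simplex1 -> Prop := fun b' => good b' /\ Rel b' b.

Lemma Orb_act al be b : is_mob al be -> on_circ b -> Orb (act_simplex (mob al be) b) = Orb b.
Proof.
  intros Hm Hc. apply functional_extensionality. intro b'. apply propositional_extensionality.
  unfold Orb, Rel. split; intros [Hg [ga [de [Hgd E]]]]; split; auto.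
  - exists (comp_al (Cconj al) (- be)%C ga de), (comp_be (Cconj al) (- be)%C ga de).
    split. apply is_mob_comp; auto. apply is_mob_inv; auto.
    rewrite <- act_comp; auto. rewrite E. apply act_inv; auto. apply is_mob_inv; auto.
    apply good_on_circ; auto.
  - exists (comp_al al be ga de), (comp_be al be ga de). split. apply is_mob_comp; auto.
    rewrite <- act_comp; auto. rewrite E. auto. apply good_on_circ; auto.
Qed.

Definition dummy_s : simplex1 := Simplex1 (fun _ => False) (fun _ => False) (fun _ => False).

Definition zCC : C * C := (RtoC 0, RtoC 0).

Definition rep (b : simplex1) : simplex1 := epsilon (inhabits dummy_s) (Orb b).

Definition par (b : simplex1) : C * C :=
  epsilon (inhabits zCC)
    (fun pr => is_mob (fst pr) (snd pr) /\ act_simplex (mob (fst pr) (snd pr)) (rep b) = b).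

Definition ends (I : cset) : C * C :=
  epsilon (inhabits zCC) (fun pq => arc_data I (fst pq) (snd pq)).

Definition fval (b : simplex1) (z : C) : R :=
  psi (Delta (fst (ends (supp (rep b)))) (mob (Cconj (fst (par b))) (- snd (par b))%C z)
             (snd (ends (supp (rep b))))).

Definition ff (b : simplex1) (z : C) : R :=
  if excluded_middle_informative (exists b', Orb b b') then fval b z else 0.

Lemma rep_spec b : (exists b', Orb b b') -> Orb b (rep b).
Proof. intros [b' H]. unfold rep. apply epsilon_spec. exists b'; auto. Qed.

Lemma par_spec b : (exists b', Orb b b') ->
  is_mob (fst (par b)) (snd (par b)) /\ act_simplex (mob (fst (par b)) (snd (par b))) (rep b) = b.
Proof.
  intro H. destruct (rep_spec b H) as [_ [al [be [Hm E]]]].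
  unfold par. apply (epsilon_spec (inhabits zCC)
    (fun pr => is_mob (fst pr) (snd pr) /\ act_simplex (mob (fst pr) (snd pr)) (rep b) = b)).
  exists ((al, be) : C * C). simpl. auto.
Qed.

Lemma ends_spec I : inK I -> arc_data I (fst (ends I)) (snd (ends I)).
Proof.
  intro H. destruct (inK_data I H) as [p [q D]]. unfold ends.
  apply (epsilon_spec (inhabits zCC) (fun pq => arc_data I (fst pq) (snd pq))).
  exists ((p, q) : C * C). auto.
Qed.

Lemma rep_data b : (exists b', Orb b b') -> arc_data (supp (rep b)) (fst (ends (supp (rep b)))) (snd (ends (supp (rep b)))).
Proof.
  intro H. destruct (rep_spec b H) as [[[HS _] _] _]. apply ends_spec; auto.
Qed.

Lemma ff_invariant : mob_invariant ff.
Proof.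
  intros al be Hm b Hb z Hz. pose proof (simplex_on_circ b Hb) as Hc.
  unfold ff. rewrite (Orb_act al be b Hm Hc).
  destruct (excluded_middle_informative (exists b' : simplex1, Orb b b')) as [HO|HO]; auto.
  assert (Hr : rep (act_simplex (mob al be) b) = rep b) by (unfold rep; rewrite (Orb_act al be b Hm Hc); auto).
  unfold fval. rewrite !Hr.
  set (b0 := rep b).
  destruct (par_spec b HO) as [H1 E1].
  assert (HO' : exists b', Orb (act_simplex (mob al be) b) b') by (rewrite Orb_act; auto).
  destruct (par_spec _ HO') as [H2 E2].
  rewrite Hr in E2. fold b0 in E1, E2.
  destruct (rep_spec b HO) as [Hg _]. fold b0 in Hg.
  set (a1 := fst (par b)) in *. set (c1 := snd (par b)) in *.
  set (a2 := fst (par (act_simplex (mob al be) b))) in *.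
  set (c2 := snd (par (act_simplex (mob al be) b))) in *.
  assert (E3 : act_simplex (mob a2 c2) b0 = act_simplex (mob (comp_al al be a1 c1) (comp_be al be a1 c1)) b0).
  { rewrite E2, <- act_comp; auto. rewrite E1. auto. apply good_on_circ; auto. }
  pose proof (stab b0 _ _ _ _ Hg H2 (is_mob_comp _ _ _ _ Hm H1) E3) as St.
  f_equal. f_equal.
  set (w := mob (Cconj a1) (- c1)%C z).
  assert (Hw : circ w) by (apply mob_circ; auto; apply is_mob_inv; auto).
  assert (Ew : mob a2 c2 w = mob al be z).
  { rewrite St by auto. rewrite <- mob_comp; auto. unfold w. rewrite mob_inv_r; auto. }
  rewrite <- Ew. apply mob_inv_l; auto.
Qed.

Lemma fval_smooth b : (exists b', Orb b b') -> smooth_S1 (fval b).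
Proof.
  intro HO. destruct (par_spec b HO) as [H1 _].
  unfold smooth_S1. apply Cn_smooth. intro n. unfold fval.
  apply Cn_comp. apply psi_smooth. apply Cn_Delta. apply CCn_mob.
  apply is_mob_inv; auto. apply CCn_eang. apply circ_eang.
Qed.

Lemma ff_cochain : cochain1 ff.
Proof.
  intros b Hb. unfold ff.
  destruct (excluded_middle_informative (exists b' : simplex1, Orb b b')) as [HO|HO].
  - split. apply fval_smooth; auto.
    intros z Hz Hcl. destruct (Rle_or_lt (Delta (fst (ends (supp (rep b)))) (mob (Cconj (fst (par b))) (- snd (par b))%C z) (snd (ends (supp (rep b))))) 0) as [Hle|Hlt].
    + unfold fval. apply psi_zero; auto.
    + exfalso. apply Hcl. destruct (par_spec b HO) as [H1 E1].
      destruct (rep_data b HO) as [_ [_ [_ [_ HI]]]].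
      set (w := mob (Cconj (fst (par b))) (- snd (par b))%C z) in *.
      assert (Hw : circ w) by (apply mob_circ; auto; apply is_mob_inv; auto).
      assert (Sw : supp (rep b) w) by (apply HI; auto).
      assert (Sz : supp b z).
      { rewrite <- E1. simpl. exists w. split; auto. unfold w. rewrite mob_inv_r; auto. }
      intros eps Heps. exists z. split; auto. unfold Cminus. rewrite Cplus_opp_r, Cmod_0. auto.
  - split.
    + intros n t. apply Cn_smooth. intro m. apply Cn_const.
    + auto.
Qed.

Lemma ff_pos b : is_simplex1 b -> ~ degenerate b ->
  (exists z, circ z /\ ff b z <> 0) /\ (forall z, circ z -> 0 <= ff b z).
Proof.
  intros Hb Hnd.
  assert (HO : exists b', Orb b b').
  { exists b. split. split; auto. exists 1%C, 0%C. split. apply is_mob_id. apply act_id. }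
  unfold ff. destruct (excluded_middle_informative (exists b' : simplex1, Orb b b')) as [_|C0]; [|tauto].
  split.
  - destruct (par_spec b HO) as [H1 E1].
    destruct (rep_data b HO) as [_ [_ [_ [[m Hm] HI]]]].
    pose proof Hm as Hm'. apply HI in Hm'. destruct Hm' as [Hmc Hmd].
    exists (mob (fst (par b)) (snd (par b)) m). split. apply mob_circ; auto.
    unfold fval. rewrite mob_inv_l; auto. apply Rgt_not_eq. apply psi_pos. auto.
  - intros z _. apply psi_nonneg.
Qed.


Theorem proposition4p13 :
  exists f : simplex1 -> C -> R,
    cochain1 f /\ mob_invariant f /\
    forall b, is_simplex1 b -> ~ degenerate b ->
      (exists z, circ z /\ f b z <> 0) /\ (forall z, circ z -> 0 <= f b z).
Proof.
  exists ff. split. apply ff_cochain. split. apply ff_invariant. apply ff_pos.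
Qed.
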